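(* Let $\beta\in\mathbb{Z}[\mathrm{i}]$ with $|\beta|>1$ and let $(\beta,D)$ be an integral numeration system. Then every eventually periodic configuration $(a_z)_{z\in\mathbb{Z}[\mathrm{i}]}$ is $(\beta,D)$-automatic.
   Context: A configuration is a map from $\mathbb{Z}[\mathrm{i}]$ to a finite set. For finite $D\subset\mathbb{Z}[\mathrm{i}]$ with $0\in D$, a word $w=w_{n-1}\cdots w_0\in D^*$ has value $[w]_\beta=\sum_{j}w_j\beta^j$; $(\beta,D)$ is an integral numeration system if every Gaussian integer has a unique such expansion (up to leading zeros). A configuration is $(\beta,D)$-automatic if there is a deterministic finite automaton with output $(S,D,\delta,s_0,A,\tau)$ (transition map extended to words by $\delta(s,wa)=\delta(\delta(s,w),a)$) with $a_z=\tau(\delta(s_0,w))$ for every $w\in D^*$ with $[w]_\beta=z$. A configuration is eventually periodic if there exist $\mathbb{Z}$-linearly independent $p,q\in\mathbb{Z}[\mathrm{i}]$ and a finite set $F$ with $a_z=a_{z+p}=a_{z+q}$ for all $z\in\mathbb{Z}[\mathrm{i}]\setminus F$. *)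

(* Defs.v *)
From mathcomp Require Import all_boot all_order all_algebra.
Set Implicit Arguments. Unset Strict Implicit. Unset Printing Implicit Defensive.
Import Order.TTheory GRing.Theory Num.Theory.
Local Open Scope ring_scope.

(** Gaussian integers: (x, y) represents x + y i. *)
Definition gint : Type := (int * int)%type.

Definition gzero : gint := (0, 0).
Definition gadd (z w : gint) : gint := (z.1 + w.1, z.2 + w.2).
Definition gmul (z w : gint) : gint :=
  (z.1 * w.1 - z.2 * w.2, z.1 * w.2 + z.2 * w.1).
Definition gscale (m : int) (z : gint) : gint := (m * z.1, m * z.2).
Definition gnorm2 (z : gint) : int := z.1 ^+ 2 + z.2 ^+ 2.

(** Words w = w_{n-1} ... w_0 are represented as sequences in reading
    order [:: w_{n-1}; ...; w_0].  [val_le] evaluates a little-endian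
    digit list [:: w_0; w_1; ...] as sum_j w_j beta^j. *)
Fixpoint val_le (beta : gint) (ds : seq gint) : gint :=
  match ds with
  | [::] => gzero
  | d :: ds' => gadd d (gmul beta (val_le beta ds'))
  end.

Definition word_value (beta : gint) (w : seq gint) : gint :=
  val_le beta (rev w).

Definition is_word (D : seq gint) (w : seq gint) : bool := all (fun d => d \in D) w.

Definition strip_lz (w : seq gint) : seq gint :=
  drop (find (fun d => d != gzero) w) w.

Definition integral_numeration (beta : gint) (D : seq gint) : Prop :=
  gzero \in D /\
  (forall z : gint, exists w, is_word D w /\ word_value beta w = z) /\
  (forall w1 w2, is_word D w1 -> is_word D w2 ->
     word_value beta w1 = word_value beta w2 -> strip_lz w1 = strip_lz w2).

(** (beta, D)-automatic configurations: there is a DFA with output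
    (S, D, delta, s0, A, tau) reading words most-significant digit first
    (delta(s, w a) = delta(delta(s, w), a)).  The transition function is
    given on all of gint, only its values on D matter. *)
Definition automatic (beta : gint) (D : seq gint) (A : finType)
    (a : gint -> A) : Prop :=
  exists (S : finType) (delta : S -> gint -> S) (s0 : S) (tau : S -> A),
    forall w, is_word D w -> a (word_value beta w) = tau (foldl delta s0 w).

Definition Zlin_indep (p q : gint) : Prop :=
  forall m n : int, gadd (gscale m p) (gscale n q) = gzero -> m = 0 /\ n = 0.

Definition eventually_periodic (A : finType) (a : gint -> A) : Prop :=
  exists (p q : gint) (F : seq gint), Zlin_indep p q /\
    forall z, z \notin F -> a z = a (gadd z p) /\ a z = a (gadd z q).

(* Main.v *)
Require Import Defs.
From mathcomp Require Import all_boot all_order all_algebra zify ring lra.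
Import Order.TTheory GRing.Theory Num.Theory.
Set Implicit Arguments. Unset Strict Implicit.
Local Open Scope ring_scope.

Fixpoint bnd (F : seq gint) : int :=
  if F is z :: F' then `|z.1| + `|z.2| + bnd F' else 0.

Lemma bnd_ge0 F : 0 <= bnd F.
Proof. elim: F => //= z F IH; lia. Qed.

Lemma bnd_in F z : z \in F -> `|z.1| <= bnd F /\ `|z.2| <= bnd F.
Proof.
elim: F => //= y F IH; rewrite in_cons => /orP [/eqP ->|/IH [h1 h2]].
  have := bnd_ge0 F; lia.
have := bnd_ge0 F; lia.
Qed.

Lemma notin_bnd F z : bnd F < `|z.1| \/ bnd F < `|z.2| -> z \notin F.
Proof. move=> h; apply/negP => /bnd_in [h1 h2]; move: h h1 h2; case: z => x y /=; lia. Qed.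

Lemma gaddS u v (j : int) : gadd (gadd u (gscale j v)) v = gadd u (gscale (j + 1) v).
Proof. rewrite /gadd /gscale /=; congr pair; ring. Qed.
Lemma gadd0 u v : gadd u (gscale 0 v) = u.
Proof. case: u => x y; rewrite /gadd /gscale /=; congr pair; ring. Qed.

Lemma line_pos (A : finType) (a : gint -> A) (F : seq gint) (v : gint)
  (Hv : forall w, w \notin F -> a w = a (gadd w v)) u (k : nat) :
  (forall j : nat, (j <= k)%N -> gadd u (gscale j%:Z v) \notin F) ->
  a u = a (gadd u (gscale k%:Z v)).
Proof.
elim: k => [|k IH] H; first by rewrite gadd0.
rewrite IH; last by move=> j hj; apply: H; lia.
rewrite Hv; last by apply: H; lia.
by rewrite gaddS; congr (a (gadd u (gscale _ v))); lia.
Qed.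

Lemma line_neg (A : finType) (a : gint -> A) (F : seq gint) (v : gint)
  (Hv : forall w, w \notin F -> a w = a (gadd w v)) u (k : nat) :
  (forall j : nat, (j <= k)%N -> gadd u (gscale (- j%:Z) v) \notin F) ->
  a u = a (gadd u (gscale (- k%:Z) v)).
Proof.
elim: k => [|k IH] H; first by rewrite oppr0 gadd0.
rewrite IH; last by move=> j hj; apply: H; lia.
rewrite (Hv (gadd u (gscale (- k.+1%:Z) v))); last by apply: H; lia.
by rewrite gaddS; congr (a (gadd u (gscale _ v))); lia.
Qed.

Lemma line (A : finType) (a : gint -> A) (F : seq gint) (v : gint)
  (Hv : forall w, w \notin F -> a w = a (gadd w v)) u (m : int) :
  (forall j : int, `|j| <= `|m| -> gadd u (gscale j v) \notin F) ->
  a u = a (gadd u (gscale m v)).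
Proof.
case: m => k H.
  apply: (line_pos Hv) => j hj; apply: H; lia.
have -> : Negz k = - (k.+1)%:Z by lia.
apply: (line_neg Hv) => j hj; apply: H; lia.
Qed.

Definition PP (p q : gint) : int := `|p.1| + `|p.2| + `|q.1| + `|q.2|.
Definition CC (F : seq gint) (p q : gint) : int := bnd F + 2 * (PP p q * PP p q).

Lemma far_notin (F : seq gint) (p q u : gint) (e1 e2 : int) :
  `|e1| <= 2 * (PP p q * PP p q) -> `|e2| <= 2 * (PP p q * PP p q) ->
  CC F p q < `|u.1| \/ CC F p q < `|u.2| -> (u.1 + e1, u.2 + e2) \notin F.
Proof.
rewrite /CC => h1 h2 h; apply: notin_bnd => /=; lia.
Qed.

Lemma two_step (A : finType) (a : gint -> A) (F : seq gint) (p q : gint)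
  (Hp : forall w, w \notin F -> a w = a (gadd w p))
  (Hq : forall w, w \notin F -> a w = a (gadd w q)) u (m n : int) :
  `|m| <= PP p q -> `|n| <= PP p q ->
  CC F p q < `|u.1| \/ CC F p q < `|u.2| ->
  a u = a (gadd (gadd u (gscale m p)) (gscale n q)).
Proof.
move=> hm hn hu.
have P0 : 0 <= PP p q by rewrite /PP; lia.
have hp1 : `|p.1| <= PP p q by rewrite /PP; lia.
have hp2 : `|p.2| <= PP p q by rewrite /PP; lia.
have hq1 : `|q.1| <= PP p q by rewrite /PP; lia.
have hq2 : `|q.2| <= PP p q by rewrite /PP; lia.
have bnd2 : forall x y : int, `|x| <= PP p q -> `|y| <= PP p q -> `|x * y| <= PP p q * PP p q.
  move=> x y hx hy; rewrite normrM; apply: ler_pM => //.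
rewrite (line Hp (m := m)); last first.
  move=> j hj; have -> : gadd u (gscale j p) = (u.1 + j * p.1, u.2 + j * p.2) by [].
  apply: (far_notin (p:=p) (q:=q)) => //.
  - have := bnd2 j p.1 (le_trans hj hm) hp1; lia.
  - have := bnd2 j p.2 (le_trans hj hm) hp2; lia.
rewrite (line Hq (m := n)) //.
move=> j hj.
have -> : gadd (gadd u (gscale m p)) (gscale j q) =
  (u.1 + (m * p.1 + j * q.1), u.2 + (m * p.2 + j * q.2)).
  by rewrite /gadd /gscale /=; congr pair; ring.
apply: (far_notin (p:=p) (q:=q)) => //.
- have := bnd2 m p.1 hm hp1; have := bnd2 j q.1 (le_trans hj hn) hq1.
  move: (m * p.1) (j * q.1) (PP p q * PP p q) => x y z; lia.
- have := bnd2 m p.2 hm hp2; have := bnd2 j q.2 (le_trans hj hn) hq2.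
  move: (m * p.2) (j * q.2) (PP p q * PP p q) => x y z; lia.
Qed.
Lemma vert (A : finType) (a : gint -> A) (C N : int)
  (Hy : forall u : gint, C < `|u.1| -> a u = a (u.1, u.2 + N)) (x y : int) (l : int) :
  C < `|x| -> a (x, y) = a (x, y + l * N).
Proof.
move=> hx.
have pos : forall (k : nat) y, a (x, y) = a (x, y + k%:Z * N).
  elim=> [|k IH] y0; first by rewrite mul0r addr0.
  rewrite IH (Hy (x, y0 + k%:Z * N)) //=; congr (a (x, _)); ring.
case: l => k; first exact: pos.
rewrite (pos k.+1 (y + Negz k * N)); congr (a (x, _)); lia.
Qed.

Lemma horiz (A : finType) (a : gint -> A) (C N : int)
  (Hx : forall u : gint, C < `|u.2| -> a u = a (u.1 + N, u.2)) (x y : int) (l : int) :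
  C < `|y| -> a (x, y) = a (x + l * N, y).
Proof.
move=> hy.
have pos : forall (k : nat) x, a (x, y) = a (x + k%:Z * N, y).
  elim=> [|k IH] x0; first by rewrite mul0r addr0.
  rewrite IH (Hx (x0 + k%:Z * N, y)) //=; congr (a (_, y)); ring.
case: l => k; first exact: pos.
rewrite (pos k.+1 (x + Negz k * N)); congr (a (_, y)); lia.
Qed.

Lemma route (A : finType) (a : gint -> A) (C N : int)
  (Hx : forall u : gint, C < `|u.1| \/ C < `|u.2| -> a u = a (u.1 + N, u.2))
  (Hy : forall u : gint, C < `|u.1| \/ C < `|u.2| -> a u = a (u.1, u.2 + N))
  (z : gint) (X Y k l : int) :
  C < `|z.1| \/ C < `|z.2| -> C < X -> C < Y ->
  X = z.1 + k * N -> Y = z.2 + l * N -> a z = a (X, Y).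
Proof.
have Hy' : forall u : gint, C < `|u.1| -> a u = a (u.1, u.2 + N) by move=> u h; apply: Hy; left.
have Hx' : forall u : gint, C < `|u.2| -> a u = a (u.1 + N, u.2) by move=> u h; apply: Hx; right.
case: z => z1 z2 /= [h|h] hX hY eX eY; subst X Y.
  rewrite (vert Hy' z2 l h).
  by rewrite (horiz Hx' z1 k (_ : C < `|z2 + l * N|)) //; lia.
rewrite (horiz Hx' z1 k h).
by rewrite (vert Hy' z2 l (_ : C < `|z1 + k * N|)) //; lia.
Qed.

Lemma period (A : finType) (a : gint -> A) (C N : int)
  (Hx : forall u : gint, C < `|u.1| \/ C < `|u.2| -> a u = a (u.1 + N, u.2))
  (Hy : forall u : gint, C < `|u.1| \/ C < `|u.2| -> a u = a (u.1, u.2 + N))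
  (HN : 0 < N) (HC : 0 <= C) (z z' : gint) (k1 k2 : int) :
  C < `|z.1| \/ C < `|z.2| -> C < `|z'.1| \/ C < `|z'.2| ->
  z'.1 = z.1 + k1 * N -> z'.2 = z.2 + k2 * N -> a z = a z'.
Proof.
move=> hz hz' e1 e2.
set K1 := C + `|z.1| + 1; set K2 := C + `|z.2| + 1.
have h1 : K1 <= K1 * N by nia.
have h2 : K2 <= K2 * N by nia.
rewrite (route Hx Hy (X := z.1 + K1 * N) (Y := z.2 + K2 * N) (k := K1) (l := K2) hz) //; try lia.
rewrite (route Hx Hy (X := z.1 + K1 * N) (Y := z.2 + K2 * N) (k := K1 - k1) (l := K2 - k2) hz') //; try lia.
Qed.

Lemma ep_struct (A : finType) (a : gint -> A) : eventually_periodic a ->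
  exists C N : int, 0 <= C /\ 0 < N /\
  (forall u : gint, C < `|u.1| \/ C < `|u.2| -> a u = a (u.1 + N, u.2)) /\
  (forall u : gint, C < `|u.1| \/ C < `|u.2| -> a u = a (u.1, u.2 + N)).
Proof.
case=> p [q [F [Hind Hper]]].
have Hp : forall w, w \notin F -> a w = a (gadd w p) by move=> w /Hper [].
have Hq : forall w, w \notin F -> a w = a (gadd w q) by move=> w /Hper [].
set det := p.1 * q.2 - p.2 * q.1.
have det0 : det != 0.
  apply/negP => /eqP d0.
  have [h1 h2] : q.2 = 0 /\ - p.2 = 0.
    apply: Hind; rewrite /gadd /gscale /gzero /=; congr pair.
      by rewrite -d0 /det; ring.
    ring.
  have [h3 h4] : q.1 = 0 /\ - p.1 = 0.
    apply: Hind; rewrite /gadd /gscale /gzero /=; congr pair.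
      ring.
    have -> : q.1 * p.2 + - p.1 * q.2 = - det by rewrite /det; ring.
    by rewrite d0 oppr0.
  have [h5 _] : (1 : int) = 0 /\ (0 : int) = 0.
    apply: Hind; rewrite /gadd /gscale /gzero /=.
    have -> : p.1 = 0 by lia.
    have -> : p.2 = 0 by lia.
    by rewrite !mulr0 !mul0r !addr0.
  by [].
set s : int := if 0 < det then 1 else -1.
have hs : s = 1 \/ s = -1 by rewrite /s; case: ifP; [left|right].
have HN : 0 < s * det by rewrite /s; case: ifP => h; lia.
have P0 : 0 <= PP p q by rewrite /PP; lia.
have hsm : forall x : int, `|x| <= PP p q -> `|s * x| <= PP p q.
  by move=> x hx; case: hs => ->; lia.
have hp1 : `|p.1| <= PP p q by rewrite /PP; lia.
have hp2 : `|p.2| <= PP p q by rewrite /PP; lia.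
have hq1 : `|q.1| <= PP p q by rewrite /PP; lia.
have hq2 : `|q.2| <= PP p q by rewrite /PP; lia.
exists (CC F p q), (s * det); split; first by rewrite /CC; have := bnd_ge0 F; nia.
split=> //; split=> u hu.
  rewrite (two_step Hp Hq (m := s * q.2) (n := - (s * p.2)) _ _ hu).
  - congr a; rewrite /gadd /gscale /det /=; congr pair; ring.
  - exact: hsm.
  - rewrite normrN; exact: hsm.
rewrite (two_step Hp Hq (m := - (s * q.1)) (n := s * p.1) _ _ hu).
- congr a; rewrite /gadd /gscale /det /=; congr pair; ring.
- rewrite normrN; exact: hsm.
- exact: hsm.
Qed.
Fixpoint bndn (D : seq gint) : int :=
  if D is d :: D' then gnorm2 d + bndn D' else 0.

Lemma gnorm2_ge0 z : 0 <= gnorm2 z.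
Proof. rewrite /gnorm2 !expr2; nia. Qed.

Lemma bndn_ge0 D : 0 <= bndn D.
Proof. elim: D => //= d D IH; have := gnorm2_ge0 d; lia. Qed.

Lemma bndn_in D d : d \in D -> gnorm2 d <= bndn D.
Proof.
elim: D => //= y D IH; rewrite in_cons => /orP [/eqP ->|/IH h].
  have := bndn_ge0 D; lia.
have := gnorm2_ge0 y; lia.
Qed.

Lemma growth (b v d : gint) (M R : int) :
  1 < gnorm2 b -> gnorm2 d <= M -> 6 * M <= R -> 0 <= R -> R < gnorm2 v ->
  R < gnorm2 (gadd d (gmul b v)).
Proof.
have e : gnorm2 (gmul b v) = gnorm2 b * gnorm2 v.
  by rewrite /gnorm2 /gmul /=; ring.
have ineq : 3 * gnorm2 (gmul b v) - 12 * gnorm2 d <= 4 * gnorm2 (gadd d (gmul b v)).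
  have key : forall x1 x2 d1 d2 : int, 3 * (x1 ^+ 2 + x2 ^+ 2) - 12 * (d1 ^+ 2 + d2 ^+ 2)
      <= 4 * ((d1 + x1) ^+ 2 + (d2 + x2) ^+ 2).
    move=> x1 x2 d1 d2; rewrite -subr_ge0.
    have -> : 4 * ((d1 + x1) ^+ 2 + (d2 + x2) ^+ 2) - (3 * (x1 ^+ 2 + x2 ^+ 2) - 12 * (d1 ^+ 2 + d2 ^+ 2))
       = (x1 + 4 * d1) ^+ 2 + (x2 + 4 * d2) ^+ 2 by ring.
    by rewrite addr_ge0 // sqr_ge0.
  exact: key.
move: ineq; rewrite e => ineq hb hd hR R0 hv.
have : 2 * gnorm2 v <= gnorm2 b * gnorm2 v by nia.
nia.
Qed.

Definition enc (m : int) (K : nat) (x : int) : 'I_K.+1 := inord (absz (x %% m)%Z).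

Lemma enc_eq m K x y : 0 < m -> absz m = K -> enc m K x = enc m K y ->
  exists k, y = x + k * m.
Proof.
move=> hm hK /(congr1 val) /=.
have mn : m != 0 by lia.
have := modz_ge0 x mn; have := modz_ge0 y mn.
have := ltz_pmod x hm; have := ltz_pmod y hm.
move=> h1 h2 h3 h4.
rewrite !inordK; try lia.
move=> h.
have hxy : (x %% m)%Z = (y %% m)%Z by lia.
exists ((y %/ m)%Z - (x %/ m)%Z).
have := divz_eq x m; have := divz_eq y m.
rewrite mulrBl; lia.
Qed.

Lemma enc_shift m K x k : enc m K (x + k * m) = enc m K x.
Proof. by rewrite /enc addrC modzMDl. Qed.

From Stdlib Require ClassicalEpsilon.
Unset Implicit Arguments.

Theorem lemma5p1 (beta : gint) (D : seq gint) :
  1 < gnorm2 beta -> integral_numeration beta D ->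
  forall (A : finType) (a : gint -> A),
    eventually_periodic a -> automatic beta D a.
Proof.
move=> hb _ A a /ep_struct [C [N [C0 [N0 [Hx Hy]]]]].
set M := bndn D.
have M0 : 0 <= M := bndn_ge0 D.
set R := 2 * (C * C) + 6 * M.
have R0 : 0 <= R by rewrite /R; nia.
set m := N * (2 * R + 1).
have m0 : 0 < m by rewrite /m; nia.
set K := absz m.
pose f (v : gint) : ('I_K.+1 * 'I_K.+1 * bool)%type :=
  (enc m K v.1, enc m K v.2, gnorm2 v <= R).
have small : forall v : gint, gnorm2 v <= R -> `|v.1| <= R /\ `|v.2| <= R.
  move=> [x y]; rewrite /gnorm2 /= !expr2 => h; nia.
have big : forall v : gint, R < gnorm2 v -> C < `|v.1| \/ C < `|v.2|.
  move=> [x y]; rewrite /gnorm2 /R /= !expr2 => h; nia.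
have KEY : forall v v', f v = f v' -> v = v' \/
   (R < gnorm2 v /\ R < gnorm2 v' /\
    exists k1 k2, v'.1 = v.1 + k1 * m /\ v'.2 = v.2 + k2 * m).
  move=> v v' [e1 e2 e3].
  have [k1 ek1] := enc_eq m0 erefl e1.
  have [k2 ek2] := enc_eq m0 erefl e2.
  case: (boolP (gnorm2 v <= R)) => h.
    left.
    have h' : gnorm2 v' <= R by rewrite -e3.
    have [s1 s2] := small v h; have [s1' s2'] := small v' h'.
    have k10 : k1 = 0 by move: s1' s1 ek1 m0; rewrite /m; nia.
    have k20 : k2 = 0 by move: s2' s2 ek2 m0; rewrite /m; nia.
    move: ek1 ek2; rewrite k10 k20 !mul0r !addr0 => ek1 ek2.
    destruct v as [x y]; destruct v' as [x' y']; simpl in ek1, ek2; by rewrite ek1 ek2.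
  right.
  have h' : ~~ (gnorm2 v' <= R) by rewrite -e3.
  split; first by rewrite ltNge.
  split; first by rewrite ltNge.
  by exists k1, k2.
have P1 : forall v v', f v = f v' -> a v = a v'.
  move=> v v' /KEY [-> //|[hv [hv' [k1 [k2 [e1 e2]]]]]].
  apply: (period Hx Hy N0 C0 (k1 := k1 * (2 * R + 1)) (k2 := k2 * (2 * R + 1))).
  - exact: big.
  - exact: big.
  - by rewrite e1 /m; ring.
  - by rewrite e2 /m; ring.
have P2 : forall v v' d, d \in D -> f v = f v' ->
    f (gadd d (gmul beta v)) = f (gadd d (gmul beta v')).
  move=> v v' d hd /KEY [-> //|[hv [hv' [k1 [k2 [e1 e2]]]]]].
  have hdM : gnorm2 d <= M := bndn_in hd.
  have g1 := growth hb hdM (_ : 6 * M <= R) R0 hv.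
  have g2 := growth hb hdM (_ : 6 * M <= R) R0 hv'.
  rewrite /f; congr (_, _, _).
  - have -> : (gadd d (gmul beta v')).1 =
        (gadd d (gmul beta v)).1 + (beta.1 * k1 - beta.2 * k2) * m.
      by rewrite /gadd /gmul /= e1 e2; ring.
    by rewrite enc_shift.
  - have -> : (gadd d (gmul beta v')).2 =
        (gadd d (gmul beta v)).2 + (beta.1 * k2 + beta.2 * k1) * m.
      by rewrite /gadd /gmul /= e1 e2; ring.
    by rewrite enc_shift.
  - rewrite (lt_geF (g1 _)) ?(lt_geF (g2 _)) //; rewrite /R; lia.
pose g s := ClassicalEpsilon.epsilon (inhabits gzero) (fun v => f v = s).
have gf : forall v, f (g (f v)) = f v.
  move=> v; apply: (ClassicalEpsilon.epsilon_spec (inhabits gzero) (fun u => f u = f v)).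
  by exists v.
exists ('I_K.+1 * 'I_K.+1 * bool)%type.
exists (fun s d => f (gadd d (gmul beta (g s)))), (f gzero), (fun s => a (g s)).
have inv : forall w, is_word D w ->
    foldl (fun s d => f (gadd d (gmul beta (g s)))) (f gzero) w = f (word_value beta w).
  elim/last_ind => [|w d IH]; first by [].
  rewrite /is_word all_rcons => /andP [hd hw].
  rewrite foldl_rcons IH // /word_value rev_rcons /=.
  exact: P2 (gf _).
move=> w hw; rewrite inv //.
apply: P1; by rewrite gf.
Qed.
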